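(* Let $\sqsubset$ be a precedence on a finite signature $\mathcal F$ with rank function $\mathrm{rk}$, and let $(G,l,r)$ be a constructor graph rewrite rule with $G{\restriction}r\sqsubset_{\mathrm{pt}}G{\restriction}l$. Let $G_L\in\mathcal{TG}_{\mathrm{nrm}}(\mathcal F)$ be a closed instance of $G{\restriction}l$ (i.e. a closed term graph with a homomorphism $\psi:G{\restriction}l\to G_L$ mapping $l$ to $\rho_{G_L}$), and let $G_R\in\mathcal{TG}_{\mathrm{nrm}}(\mathcal F)$ be the corresponding closed instance of $G{\restriction}r$ (obtained by instantiating each unlabeled node $x$ of $G{\restriction}r$ with $G_L{\restriction}\psi(x)$, i.e. the result of rewriting $G_L$ at its root with the redex $((G,l,r),\psi)$). If $|G{\restriction}r|\le\ell$ for a positive integer $\ell$, then $\pi_\ell(G_R)<\pi_\ell(G_L)$.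
   Context: Term graphs. $\mathcal F=\mathcal C\cup\mathcal D$ is a finite signature (constructors and defined symbols, disjoint) with arity function $\mathrm{ar}$. A labeled graph consists of a finite acyclic directed graph $(V_G,E_G)$, a partial labeling $\mathrm{lab}_G:V_G\to\mathcal F$ and a successor function $\mathrm{att}_G:V_G\to V_G^*$ such that $\mathrm{att}_G(v)$ has length $\mathrm{ar}(\mathrm{lab}_G(v))$ if $v$ is labeled and is empty otherwise, and the set of entries of $\mathrm{att}_G(v)$ equals $\{u:(v,u)\in E_G\}$. Unlabeled nodes act as variables. A term graph additionally has a root $\rho_G$ from which every node is reachable; $\mathcal{TG}(\mathcal C)$ denotes term graphs whose labeled nodes carry constructors. $G{\restriction}v$ is the sub-term graph of nodes reachable from $v$; $H\subseteq G$ means $H=G{\restriction}v$ for some $v$. $|G|=|V_G|$. $\mathrm{depth}(G)$ is the length of a longest path from $\rho_G$. $G$ is closed if every node is labeled; basic if $\mathrm{lab}_G(\rho_G)\in\mathcal D$ and $G{\restriction}v\in\mathcal{TG}(\mathcal C)$ for every successor $v$ of $\rho_G$. Homomorphisms preserve labels, successor sequences (at labeled nodes only) and the normal/safe split. A graph rewrite rule $(K,l,r)$ is a labeled graph with distinct nodes $l,r$, every unlabeled node of $K{\restriction}r$ lying in $K{\restriction}l$; it is a constructor rule if $K{\restriction}l$ is basic. Argument separation. The argument positions of each $f\in\mathcal F$ are split into normal and safe ones; constructors have only safe positions; nodes with the same label have the same separation. $\mathrm{nrm}(v)$ (resp. $\mathrm{safe}(v)$) is the set of successors of $v$ at normal (resp.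 safe) positions. $H\sqsubset_{\mathrm{nrm}}G$ means $H\subseteq G{\restriction}v$ for some $v\in\mathrm{nrm}(\rho_G)$. Precedence. A precedence $\sqsubset$ is a well-founded strict partial order on $\mathcal F$ with all constructors minimal, with a rank function $\mathrm{rk}:\mathcal F\to\mathbb N$ compatible with it ($g\sqsubset f$ implies $\mathrm{rk}(g)<\mathrm{rk}(f)$). $H\sqsubset_{\mathrm{pt}}G$ holds if $\mathrm{lab}_H(v)\sqsubset\mathrm{lab}_G(\rho_G)$ for every labeled node $v$ of $H$ and either (1) $H=G{\restriction}u$ or $H\sqsubset_{\mathrm{pt}}G{\restriction}u$ for some successor $u$ of $\rho_G$; or (2) $\rho_H$ is labeled, $H{\restriction}v\sqsubset_{\mathrm{nrm}}G$ for each $v\in\mathrm{nrm}(\rho_H)$, and $H{\restriction}v\sqsubset_{\mathrm{pt}}G$ for each $v\in\mathrm{safe}(\rho_H)$. Safe paths and $\mathcal{TG}_{\mathrm{nrm}}$. A path is safe if each next node is a safe successor of the previous one; $\mathrm{SP}_G(v)$ is the set of nodes lying on a safe path from $v$ (including $v$), and $\mathrm{SP}_G=\mathrm{SP}_G(\rho_G)$. $G\in\mathcal{TG}_{\mathrm{nrm}}(\mathcal F)$ iff $G\in\mathcal{TG}(\mathcal C)$, or $G{\restriction}v\in\mathcal{TG}(\mathcal C)$ for all $v\in\mathrm{nrm}(\rho_G)$ and $G{\restriction}v\in\mathcal{TG}_{\mathrm{nrm}}(\mathcal F)$ for all $v\in\mathrm{safe}(\rho_G)$. Interpretation. For a positive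 integer $\ell$ and a closed term graph $G$ with labeled root, let $\mathrm{pj}_\ell(G)=(1+\ell)^{2\,\mathrm{rk}(\mathrm{lab}_G(\rho_G))}\cdot\big(1+\sum_{u\in\mathrm{nrm}(\rho_G)}\mathrm{depth}(G{\restriction}u)\big)$, and for $G\in\mathcal{TG}_{\mathrm{nrm}}(\mathcal F)$ closed let $\pi_\ell(G)=\sum\{\mathrm{pj}_\ell(G{\restriction}v) : v\in\mathrm{SP}_G,\ G{\restriction}v\notin\mathcal{TG}(\mathcal C)\}$ (so $\pi_\ell(G)=0$ if $G\in\mathcal{TG}(\mathcal C)$). *)

(* Defs.v *)
From mathcomp Require Import all_boot.
Set Implicit Arguments.
Unset Strict Implicit.
Unset Printing Implicit Defensive.

(* [is_defined f] : f is a defined symbol (in D); otherwise a constructor (in C).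
   [is_normal f i] : argument position i (0-based, i < ar f) of f is normal;
   otherwise it is safe. *)
Record signature := Signature {
  sym : finType;
  ar : sym -> nat;
  is_defined : pred sym;
  is_normal : sym -> pred nat;
  constr_no_normal : forall f i, ~~ is_defined f -> i < ar f -> ~~ is_normal f i
}.

Record precedence (S : signature) := Precedence {
  prec : rel (sym S);                       (* prec g f  <->  g ⊏ f *)
  rk : sym S -> nat;
  prec_irr : irreflexive prec;
  prec_trans : transitive prec;
  prec_wf : well_founded (fun g f => prec g f);
  prec_constr_min : forall c g, ~~ is_defined c -> ~~ prec g c;
  rk_compat : forall g f, prec g f -> rk g < rk f
}.

(* Unlabeled nodes (lab = None) act as variables.  The edge set is the set of
   entries of the successor lists. *)
Record lgraph (S : signature) := LGraph {
  node : finType;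
  lab : node -> option (sym S);
  att : node -> seq node
}.

Section Graphs.
Variable S : signature.

Section OneGraph.
Variable G : lgraph S.

Definition edge : rel (node G) := fun v u => u \in att v.
(* u is a node of the sub-term graph G|v *)
Definition reach (v u : node G) : bool := connect edge v u.

Definition lgraph_wf : Prop :=
  (forall v : node G, size (att v) = if lab v is Some f then ar f else 0) /\
  (forall v u, u \in att v -> ~~ reach u v).

Definition term_graph (rho : node G) : Prop :=
  lgraph_wf /\ forall v, reach rho v.

Definition closed_at (v : node G) : Prop :=
  forall u, reach v u -> lab u <> None.

Definition succ_at (Q : sym S -> pred nat) (v : node G) : seq (node G) :=
  if lab v is Some f then
    [seq nth v (att v) i | i <- iota 0 (ar f) & Q f i]
  else [::].
Definition nrm (v : node G) := succ_at (@is_normal S) v.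
Definition safe (v : node G) := succ_at (fun f i => ~~ is_normal f i) v.

Definition constr_lab (o : option (sym S)) : bool :=
  if o is Some f then ~~ is_defined f else true.

Definition constr_tg (v : node G) : bool :=
  [forall u, reach v u ==> constr_lab (lab u)].

Inductive tg_nrm : node G -> Prop :=
| tg_nrm_constr v : constr_tg v -> tg_nrm v
| tg_nrm_sep v :
    (forall u, u \in nrm v -> constr_tg u) ->
    (forall u, u \in safe v -> tg_nrm u) -> tg_nrm v.

Definition basic (v : node G) : Prop :=
  (exists2 f, lab v = Some f & is_defined f) /\
  (forall u, u \in att v -> constr_tg u).

Definition nrm_below (h g : node G) : Prop :=
  exists2 v, v \in nrm g & reach v h.

Section Pt.
Variable P : precedence S.

Definition prec_below (h g : node G) : Prop :=
  forall w, reach h w -> forall f, lab w = Some f ->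
    exists2 f0, lab g = Some f0 & prec P f f0.

Inductive pt : node G -> node G -> Prop :=
| pt_sub h g u :
    prec_below h g -> u \in att g -> (h = u \/ pt h u) -> pt h g
| pt_sep h g f :
    prec_below h g -> lab h = Some f ->
    (forall v, v \in nrm h -> nrm_below v g) ->
    (forall v, v \in safe h -> pt v g) -> pt h g.

(* depth: length of a longest path; paths in an acyclic graph have length
   < #|node G|, so the bounded recursion below computes it exactly. *)
Fixpoint depth_upto (n : nat) (v : node G) : nat :=
  if n is n'.+1 then \max_(u <- att v) (depth_upto n' u).+1 else 0.
Definition depth (v : node G) : nat := depth_upto #|node G| v.

Definition size_at (v : node G) : nat := #|[set u | reach v u]|.

Definition safe_edge : rel (node G) := fun v u => u \in safe v.
Definition SP (v : node G) : {set node G} := [set u | connect safe_edge v u].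

Definition rk_at (v : node G) : nat :=
  if lab v is Some f then rk P f else 0.

Definition pj (ell : nat) (v : node G) : nat :=
  (1 + ell) ^ (2 * rk_at v) * (1 + \sum_(u | u \in nrm v) depth u).

Definition pi_l (ell : nat) (rho : node G) : nat :=
  \sum_(v | (v \in SP rho) && ~~ constr_tg v) pj ell v.

End Pt.
End OneGraph.

Definition constructor_rule (K : lgraph S) (l r : node K) : Prop :=
  lgraph_wf K /\ l != r /\
  (forall x, reach r x -> lab x = None -> reach l x) /\
  basic l.

Definition hom (K GL : lgraph S) (l : node K) (psi : node K -> node GL) : Prop :=
  forall v, reach l v -> forall f, lab v = Some f ->
    lab (psi v) = Some f /\ att (psi v) = map psi (att v).

(* Instantiation of K|r by psi: labeled nodes of K are kept, edges into an
   unlabeled node x are redirected to psi x in GL (sharing preserved). *)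
Section Inst.
Variables (K GL : lgraph S) (psi : node K -> node GL).

Definition redirect (x : node K) : (node K + node GL)%type :=
  if lab x is Some _ then inl x else inr (psi x).

Definition inst_lab (x : (node K + node GL)%type) : option (sym S) :=
  match x with inl v => lab v | inr u => lab u end.

Definition inst_att (x : (node K + node GL)%type) : seq (node K + node GL)%type :=
  match x with
  | inl v => map redirect (att v)
  | inr u => map inr (att u)
  end.

Definition inst : lgraph S := @LGraph S (node K + node GL)%type inst_lab inst_att.
End Inst.

End Graphs.

(* Main.v *)
Require Import Defs.
From mathcomp Require Import all_boot zify.

Module Helpers.
Set Implicit Arguments.
Unset Strict Implicit.
Unset Printing Implicit Defensive.

Definition wfsize (S : signature) (G : lgraph S) (v : node G) :=
  size (att v) = if lab v is Some f then ar f else 0.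

Lemma succ_at_map (S : signature) (G1 G2 : lgraph S) Q (v : node G1) (v' : node G2)
  (h : node G1 -> node G2) :
  lab v' = lab v -> wfsize v -> att v' = map h (att v) ->
  succ_at Q v' = map h (succ_at Q v).
Proof.
rewrite /succ_at /wfsize => ->; case: (lab v) => [f|//] Hs Ha.
rewrite -map_comp; apply/eq_in_map => i.
rewrite mem_filter mem_iota => /andP[_ /andP[_ Hi]] /=.
by rewrite Ha (nth_map v) // Hs.
Qed.

Lemma succ_at_sub (S : signature) (G : lgraph S) (Q : sym S -> pred nat) (v x : node G) :
  wfsize v -> x \in succ_at Q v -> x \in att v.
Proof.
rewrite /succ_at /wfsize; case: (lab v) => [f|//] Hs.
case/mapP => i; rewrite mem_filter mem_iota => /andP[_ /andP[_ Hi]] ->.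
by apply: mem_nth; rewrite Hs.
Qed.

Lemma succ_at_all (S : signature) (G : lgraph S) (Q : sym S -> pred nat) (v : node G) f :
  lab v = Some f -> wfsize v -> (forall i, i < ar f -> Q f i) -> succ_at Q v = att v.
Proof.
rewrite /succ_at /wfsize => -> Hs HQ.
rewrite (@eq_in_filter _ _ predT); last first.
  by move=> i; rewrite mem_iota => /andP[_ Hi]; apply: HQ.
by rewrite filter_predT -Hs -/(mkseq _ _) mkseq_nth.
Qed.

Lemma succ_at_nil (S : signature) (G : lgraph S) (Q : sym S -> pred nat) (v : node G) f :
  lab v = Some f -> (forall i, i < ar f -> ~~ Q f i) -> succ_at Q v = [::].
Proof.
rewrite /succ_at => -> HQ.
rewrite (@eq_in_filter _ _ pred0) ?filter_pred0 //.
by move=> i; rewrite mem_iota => /andP[_ Hi]; apply/negbTE/HQ.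
Qed.

Lemma constr_safe (S : signature) (G : lgraph S) (v : node G) f :
  lab v = Some f -> wfsize v -> ~~ is_defined f -> safe v = att v.
Proof.
move=> Hl Hs Hd; apply: (succ_at_all Hl Hs) => i Hi.
exact: constr_no_normal.
Qed.

Lemma constr_nrm (S : signature) (G : lgraph S) (v : node G) f :
  lab v = Some f -> ~~ is_defined f -> nrm v = [::].
Proof.
move=> Hl Hd; apply: (succ_at_nil Hl) => i Hi.
exact: constr_no_normal.
Qed.

Lemma reach_edge (S : signature) (G : lgraph S) (v u : node G) :
  u \in att v -> reach v u.
Proof. by move=> H; apply: connect1. Qed.

Lemma reach_trans (S : signature) (G : lgraph S) (a b c : node G) :
  reach a b -> reach b c -> reach a c.
Proof. exact: connect_trans. Qed.

Lemma reach_refl (S : signature) (G : lgraph S) (a : node G) : reach a a.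
Proof. exact: connect0. Qed.

Lemma size_lt (S : signature) (G : lgraph S) (v u : node G) :
  lgraph_wf G -> u \in att v -> size_at u < size_at v.
Proof.
move=> [_ Hac] Hu; rewrite /size_at; apply: proper_card; apply/properP; split.
  apply/subsetP => x; rewrite !inE => Hx.
  exact: reach_trans (reach_edge Hu) Hx.
by exists v; rewrite !inE ?reach_refl // (negbTE (Hac _ _ Hu)).
Qed.

Lemma size_pos (S : signature) (G : lgraph S) (v : node G) : 0 < size_at v.
Proof. by rewrite /size_at; apply/card_gt0P; exists v; rewrite inE reach_refl. Qed.

Lemma size_le (S : signature) (G : lgraph S) (v : node G) : size_at v <= #|node G|.
Proof. exact: max_card. Qed.

Lemma depth_stab (S : signature) (G : lgraph S) : lgraph_wf G ->
  forall n m (v : node G), size_at v <= n -> size_at v <= m ->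
  depth_upto n v = depth_upto m v.
Proof.
move=> Hwf; elim=> [|n IH] m v Hn Hm.
  by move: (size_pos v); rewrite ltnNge Hn.
case: m Hm => [|m] Hm; first by move: (size_pos v); rewrite ltnNge Hm.
rewrite /=; apply: eq_big_seq => u Hu; congr (_.+1).
have := size_lt Hwf Hu => Hlt.
apply: IH; rewrite -ltnS; exact: leq_trans Hlt _.
Qed.

Lemma max_mono (T : eqType) (s : seq T) (F G : T -> nat) :
  (forall x, x \in s -> F x <= G x) -> \max_(x <- s) F x <= \max_(x <- s) G x.
Proof.
move=> H; apply/bigmax_leqP_seq => x Hx _.
apply: leq_trans (H _ Hx) _; exact: leq_bigmax_seq.
Qed.

Definition pt_ind2 (S : signature) (P : precedence S) (G : lgraph S)
  (Q : node G -> node G -> Prop)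
  (Hsub : forall h g u, prec_below P h g -> u \in att g ->
     (h = u \/ (pt P h u /\ Q h u)) -> Q h g)
  (Hsep : forall h g f, prec_below P h g -> lab h = Some f ->
     (forall v, v \in nrm h -> nrm_below v g) ->
     (forall v, v \in safe h -> pt P v g /\ Q v g) -> Q h g) :
  forall h g, pt P h g -> Q h g :=
  fix F h g (H : pt P h g) {struct H} : Q h g :=
  match H with
  | pt_sub h g u Hb Hu Hor =>
      Hsub h g u Hb Hu (match Hor with
                        | or_introl e => or_introl e
                        | or_intror H' => or_intror (conj H' (F _ _ H'))
                        end)
  | pt_sep h g f Hb Hf Hn Hs =>
      Hsep h g f Hb Hf Hn (fun v Hv => conj (Hs v Hv) (F _ _ (Hs v Hv)))
  end.

Lemma ptA (S : signature) (P : precedence S) (G : lgraph S) (h g : node G) :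
  lab h = None -> pt P h g -> exists2 u, u \in att g & reach u h.
Proof.
move=> Hh H; move: h g H Hh; apply (@pt_ind2 S P G (fun h g => lab h = None -> exists2 u, u \in att g & reach u h)) => [h g u _ Hu [->|[_ IH]]|h g f _ Hf _ _] Hh.
- by exists u => //; apply: reach_refl.
- by have [u' Hu' Hr] := IH Hh; exists u => //; apply: reach_trans (reach_edge Hu') Hr.
- by rewrite Hh in Hf.
Qed.

Lemma ptB (S : signature) (P : precedence S) (G : lgraph S) (h g : node G) :
  constr_lab (lab g) -> pt P h g -> lab h = None.
Proof.
move=> Hg H.
have Hpb : prec_below P h g by case: H.
case Hh: (lab h) => [f|] //.
have [f0 Hf0 Hp] := Hpb h (reach_refl _) f Hh.
by move: Hg; rewrite Hf0 /= => Hc; move: (prec_constr_min P f Hc); rewrite Hp.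
Qed.

Section Main.
Variables (S : signature) (P : precedence S) (K : lgraph S) (l r : node K)
  (GL : lgraph S) (rootL : node GL) (psi : node K -> node GL) (ell : nat).
Hypotheses (HK : lgraph_wf K) (HG : lgraph_wf GL) (Hbas : basic l)
  (Hhom : hom l psi) (Hroot : psi l = rootL) (Htg : tg_nrm rootL)
  (Hpt : pt P r l).

Notation I := (inst psi).

Lemma wfK (v : node K) : wfsize v. Proof. exact: HK.1. Qed.
Lemma wfG (v : node GL) : wfsize v. Proof. exact: HG.1. Qed.

Lemma labl_ex : exists2 f, lab l = Some f & is_defined f.
Proof. by case: Hbas. Qed.

Lemma args_constr u : u \in att l -> constr_tg u.
Proof. by case: Hbas => _; apply. Qed.

Lemma constr_reach (G : lgraph S) (u v : node G) :
  constr_tg u -> reach u v -> constr_lab (lab v).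
Proof. by move=> /forallP H Hr; move: (H v); rewrite Hr. Qed.

Lemma constr_tg_reach (G : lgraph S) (u v : node G) :
  constr_tg u -> reach u v -> constr_tg v.
Proof.
move=> H Hr; apply/forallP => w; apply/implyP => Hw.
exact: constr_reach H (reach_trans Hr Hw).
Qed.

Lemma labeled_of_att (G : lgraph S) (a b : node G) :
  wfsize a -> b \in att a -> exists f, lab a = Some f.
Proof.
rewrite /wfsize; case: (lab a) => [f|] Hs Hb; first by exists f.
by move: Hs Hb; case: (att a).
Qed.

Lemma hom_reach a b : reach l a -> reach a b -> reach (psi a) (psi b) /\ reach l b.
Proof.
move=> Hla /connectP [p Hp ->].
elim: p a Hla Hp => [|a' p IH] a Hla /=; first by rewrite reach_refl.
move=> /andP [Ha' Hp].
have Hla' : reach l a' := reach_trans Hla (connect1 Ha').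
have [f Hf] := labeled_of_att (wfK a) Ha'.
have [_ Hatt] := Hhom Hla Hf.
have [H1 H2] := IH a' Hla' Hp; split => //.
apply: reach_trans H1; apply: reach_edge; rewrite Hatt; exact: map_f.
Qed.

Lemma hom_safe u a b : u \in att l -> reach u a -> reach a b ->
  connect (@safe_edge S GL) (psi a) (psi b).
Proof.
move=> Hu Hua /connectP [p Hp ->].
have Hlu : reach l u := reach_edge Hu.
elim: p a Hua Hp => [|a' p IH] a Hua /=; first by rewrite connect0.
move=> /andP [Ha' Hp].
have Hua' : reach u a' := reach_trans Hua (connect1 Ha').
have [f Hf] := labeled_of_att (wfK a) Ha'.
have Hla : reach l a := reach_trans Hlu Hua.
have [Hlab Hatt] := Hhom Hla Hf.
have Hc : ~~ is_defined f by move: (constr_reach (args_constr Hu) Hua); rewrite Hf.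
apply: connect_trans (IH a' Hua' Hp); apply: connect1.
rewrite /safe_edge (constr_safe Hlab (wfG _) Hc) Hatt; exact: map_f.
Qed.

Lemma lab_root : lab rootL = lab l.
Proof.
have [f Hf _] := labl_ex; rewrite Hf -Hroot; exact: (Hhom (reach_refl l) Hf).1.
Qed.

Lemma att_root : att rootL = map psi (att l).
Proof.
have [f Hf _] := labl_ex; rewrite -Hroot; exact: (Hhom (reach_refl l) Hf).2.
Qed.

Lemma succ_root (Q : sym S -> pred nat) : succ_at Q rootL = map psi (succ_at Q l).
Proof. apply: succ_at_map; [exact: lab_root|exact: wfK|exact: att_root]. Qed.

Lemma root_not_constr : ~~ constr_tg rootL.
Proof.
apply/negP => /forallP /(_ rootL); rewrite reach_refl lab_root /=.
by have [f -> Hd] := labl_ex; rewrite /= Hd.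
Qed.

Lemma nrm_root_constr u : u \in nrm rootL -> constr_tg u.
Proof.
case: Htg root_not_constr => [v -> //|v Hn _ _]; exact: Hn.
Qed.

Definition InvR (g : node GL) := constr_tg g \/ (g \in SP rootL /\ g != rootL).

Lemma invR_sub u y : u \in att l -> reach u y -> InvR (psi y).
Proof.
move=> Hu Huy.
have Hlu : reach l u := reach_edge Hu.
have [Hpsi _] := hom_reach Hlu Huy.
have [f Hf Hdf] := labl_ex.
have [i Hi Hui] := nthP l Hu.
have Hsz : size (att l) = ar f by move: (wfK l); rewrite /wfsize Hf.
case Hn: (is_normal f i).
  left; apply: constr_tg_reach Hpsi; apply: nrm_root_constr.
  rewrite /nrm succ_root -Hui; apply: map_f.
  rewrite /succ_at Hf; apply/mapP; exists i => //.
  by rewrite mem_filter Hn mem_iota /= add0n -Hsz Hi.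
right; split.
  rewrite inE; apply: connect_trans (hom_safe Hu (reach_refl u) Huy).
  apply: connect1; rewrite /safe_edge /safe succ_root -Hui; apply: map_f.
  rewrite /succ_at Hf; apply/mapP; exists i => //.
  by rewrite mem_filter Hn mem_iota /= add0n -Hsz Hi.
apply/eqP => Heq.
have Hpu : psi u \in att rootL by rewrite att_root; exact: map_f.
by move: (HG.2 _ _ Hpu); rewrite -Heq Hpsi.
Qed.


Lemma ptC_gen (G : lgraph S) (h g : node G) :
  pt P h g -> (forall u, u \in att g -> constr_tg u) ->
  (exists2 u, u \in att g & reach u h) \/
  (exists f, [/\ lab h = Some f, (forall v, v \in nrm h -> nrm_below v g)
      & (forall v, v \in safe h -> pt P v g)]).
Proof.
case=> {h g} [h g u Hb Hu [->|H]|h g f Hb Hf Hn Hs] Hc.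
- by left; exists u => //; apply: reach_refl.
- left; have Hn := ptB (constr_reach (Hc u Hu) (reach_refl u)) H.
  have [u' Hu' Hr] := ptA Hn H.
  by exists u => //; apply: reach_trans (reach_edge Hu') Hr.
- by right; exists f.
Qed.

Lemma ptC k : pt P k l ->
  (exists2 u, u \in att l & reach u k) \/
  (exists f, [/\ lab k = Some f, (forall v, v \in nrm k -> nrm_below v l)
      & (forall v, v \in safe k -> pt P v l)]).
Proof. by move=> H; apply: ptC_gen H args_constr. Qed.

Definition InvI (z : node I) : Prop :=
  match z with
  | inl k => lab r <> None /\ reach r k /\
             (pt P k l \/ exists2 u, u \in att l & reach u k)
  | inr g => InvR g
  end.

Lemma succ_inl (Q : sym S -> pred nat) k :
  succ_at (G:=I) Q (inl k) = map (redirect psi) (succ_at Q k).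
Proof. by apply: succ_at_map => //; apply: wfK. Qed.

Lemma succ_inr (Q : sym S -> pred nat) g :
  succ_at (G:=I) Q (inr g) = map inr (succ_at Q g).
Proof. by apply: succ_at_map => //; apply: wfG. Qed.


Lemma inv_step z z' : InvI z -> z' \in safe z -> InvI z'.
Proof.
case: z => [k|g] /=.
  move=> [Hr [Hrk Hk]]; rewrite /safe succ_inl => /mapP [x Hx ->].
  have Hxk : x \in att k := succ_at_sub (wfK k) Hx.
  have Hrx : reach r x := reach_trans Hrk (reach_edge Hxk).
  have Hcase : pt P x l \/ exists2 u, u \in att l & reach u x.
    case: Hk => [Hk|[u Hu Hr']]; last first.
      by right; exists u => //; apply: reach_trans Hr' (reach_edge Hxk).
    case: (ptC Hk) => [[u Hu Hr']|[f [_ _ Hs]]]; last by left; apply: Hs.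
    by right; exists u => //; apply: reach_trans Hr' (reach_edge Hxk).
  rewrite /redirect; case Hlx: (lab x) => [fx|] /=; first by [].
  case: Hcase => [Hx'|[u Hu Hr']]; last exact: invR_sub Hu Hr'.
  have [u Hu Hr'] := ptA Hlx Hx'; exact: invR_sub Hu Hr'.
rewrite /safe succ_inr => Hg /mapP [g' Hg' ->] /=.
have Hgg : g' \in att g := succ_at_sub (wfG g) Hg'.
case: Hg => [Hc|[Hsp Hne]]; first by left; apply: constr_tg_reach Hc (reach_edge Hgg).
right; split.
  by move: Hsp; rewrite !inE => Hsp; apply: connect_trans Hsp (connect1 _).
apply/eqP => Heq; move: (HG.2 _ _ Hgg); rewrite Heq.
move: Hsp; rewrite inE => Hsp.
have -> // : reach rootL g.
apply: (connect_sub _ Hsp) => a b Hab; apply: connect1.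
exact: succ_at_sub (wfG a) Hab.
Qed.

Lemma inv_start : InvI (redirect psi r).
Proof.
rewrite /redirect; case Hlr: (lab r) => [g|] /=.
  by split; [rewrite Hlr|split; [apply: reach_refl|left]].
have [u Hu Hr] := ptA Hlr Hpt; exact: invR_sub Hu Hr.
Qed.

Lemma inv_all z : z \in SP (G:=I) (redirect psi r) -> InvI z.
Proof.
rewrite inE => /connectP [p Hp ->].
elim: p (redirect psi r) inv_start Hp => [|z' p IH] z0 Hz //=.
by move/andP => [H1 H2]; apply: IH (inv_step Hz H1) H2.
Qed.

Lemma reach_inr g z : reach (G:=I) (inr g) z -> exists2 u, z = inr u & reach g u.
Proof.
move=> /connectP [p Hp ->].
elim: p g Hp => [|z' p IH] g /=; first by move=> _; exists g => //; apply: reach_refl.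
move=> /andP [H1 H2]; move: H1; rewrite /edge /= => /mapP [g' Hg' Ez]; subst z'.
have [u Hu Hr] := IH g' H2; exists u => //; exact: reach_trans (reach_edge Hg') Hr.
Qed.

Lemma constr_inr g : constr_tg g -> constr_tg (G:=I) (inr g).
Proof.
move=> Hc; apply/forallP => z; apply/implyP => Hz.
have [u -> Hu] := reach_inr Hz; exact: constr_reach Hc Hu.
Qed.

Lemma depth_upto_inr n g : depth_upto (G:=I) n (inr g) = depth_upto n g.
Proof.
elim: n g => //= n IH g; rewrite big_map; apply: eq_bigr => u _; by rewrite IH.
Qed.

Lemma cardGI : #|node GL| <= #|node I|.
Proof. by rewrite card_sum leq_addl. Qed.

Lemma depth_inr g : depth (G:=I) (inr g) = depth g.
Proof.
rewrite /depth depth_upto_inr; apply: (depth_stab HG); last exact: size_le.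
exact: leq_trans (size_le g) cardGI.
Qed.

Lemma depth_upto_redirect n x : reach l x ->
  depth_upto (G:=I) n (redirect psi x) <= depth_upto n (psi x).
Proof.
elim: n x => // n IH x Hlx.
rewrite /redirect; case Hlx': (lab x) => [f|]; last by rewrite depth_upto_inr.
have [_ Hatt] := Hhom Hlx Hlx'.
rewrite /= Hatt !big_map; apply: max_mono => y Hy; rewrite ltnS.
exact: IH (reach_trans Hlx (reach_edge Hy)).
Qed.

Lemma depth_redirect x : reach l x -> depth (G:=I) (redirect psi x) <= depth (psi x).
Proof.
move=> Hlx; rewrite /depth; apply: leq_trans (depth_upto_redirect _ Hlx) _.
rewrite (depth_stab HG (n := #|node I|) (m := #|node GL|)) ?size_le //.
exact: leq_trans (size_le _) cardGI.
Qed.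

Lemma depth_att (v u : node GL) : u \in att v -> depth u < depth v.
Proof.
move=> Hu; rewrite /depth.
rewrite [X in _ < X](depth_stab HG (m := #|node GL|.+1)) ?size_le //; last first.
  exact: leq_trans (size_le _) (leqnSn _).
rewrite /=; apply: leq_trans _ (leq_bigmax_seq _ Hu isT); by [].
Qed.

Lemma depth_reach (a b : node GL) : reach a b -> depth b <= depth a.
Proof.
move=> /connectP [p Hp ->].
elim: p a Hp => [|a' p IH] a //= /andP [H1 H2].
exact: leq_trans (IH _ H2) (ltnW (depth_att H1)).
Qed.

Definition D := \sum_(u | u \in nrm rootL) depth u.

Lemma nrm_inl_bound k u : InvI (inl k) -> u \in nrm (G:=I) (inl k) -> depth (G:=I) u <= D.
Proof.
move=> [_ [Hrk Hk]]; rewrite /nrm succ_inl => /mapP [x Hx ->].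
have Hnb : nrm_below x l.
  have Hcase : (exists2 u, u \in att l & reach u k) \/ nrm_below x l.
    case: Hk => [Hk|Hk]; last by left.
    case: (ptC Hk) => [H|[f [_ Hn _]]]; [by left|by right; apply: Hn].
  case: Hcase => [[u0 Hu0 Hr0]|//].
  have Hc := constr_reach (args_constr Hu0) Hr0.
  case Hlk: (lab k) Hc => [g|] Hc.
    by move: Hx; rewrite -/(nrm k) (constr_nrm Hlk Hc).
  by move: Hx; rewrite /succ_at Hlk.
case: Hnb => w Hw Hwx.
have Hlw : reach l w := reach_edge (succ_at_sub (wfK l) Hw).
have [Hpwx Hlx] := hom_reach Hlw Hwx.
apply: leq_trans (depth_redirect Hlx) _.
apply: leq_trans (depth_reach Hpwx) _.
have Hpw : psi w \in nrm rootL by rewrite /nrm succ_root; exact: map_f.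
by rewrite /D (bigD1 (psi w)) //= leq_addr.
Qed.

Lemma nrm_inl_in k u : reach r k -> u \in nrm (G:=I) (inl k) ->
  u \in [set redirect psi x | x in [set x | reach r x]].
Proof.
move=> Hrk; rewrite /nrm succ_inl => /mapP [x Hx ->].
apply/imsetP; exists x => //; rewrite inE.
exact: reach_trans Hrk (reach_edge (succ_at_sub (wfK k) Hx)).
Qed.

Definition R := rk_at P l.

Lemma rk_lt k g : reach r k -> lab k = Some g -> rk P g < R.
Proof.
move=> Hrk Hg; have Hpb : prec_below P r l by case: Hpt.
have [f0 Hf0 Hp] := Hpb k Hrk g Hg.
by rewrite /R /rk_at Hf0; apply: rk_compat.
Qed.

Lemma R_pos : lab r <> None -> 0 < R.
Proof.
case Hlr: (lab r) => [g|] // _; exact: leq_ltn_trans _ (@rk_lt r _ (@reach_refl _ _ r) Hlr).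
Qed.

Lemma pj_inl_bound k : InvI (inl k) ->
  pj P ell (inl k : node I) <= (1 + ell) ^ (2 * R.-1) * (1 + size_at r * D).
Proof.
move=> Hinv; have [Hr [Hrk _]] := Hinv.
rewrite /pj; apply: leq_mul.
  apply: leq_pexp2l => //; rewrite leq_mul2l; apply/orP; right.
  rewrite /rk_at /=; case Hlk: (lab k) => [g|] //.
  by rewrite -ltnS prednK ?(R_pos Hr) // (rk_lt Hrk Hlk).
rewrite leq_add2l.
apply: (@leq_trans (\sum_(u in nrm (G:=I) (inl k)) D)).
  by apply: leq_sum => u Hu; apply: nrm_inl_bound Hinv Hu.
rewrite sum_nat_const leq_mul2r; apply/orP; right.
apply: leq_trans (leq_imset_card (redirect psi) [set x | reach r x]).
apply: subset_leq_card; apply/subsetP => u; exact: nrm_inl_in Hrk.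
Qed.

Lemma pj_inr g : pj P ell (inr g : node I) = pj P ell g.
Proof.
rewrite /pj /rk_at /=; congr (_ * (1 + _)).
rewrite /nrm succ_inr -/(nrm g) big_sumType /= big_pred0 ?add0n; last first.
  by move=> x; apply/negbTE/negP => /mapP [?].
apply: eq_big => [u|u _]; last exact: depth_inr.
by rewrite mem_map // => a b [].
Qed.

Lemma arith (e X d : nat) : 0 < X -> e * (X * (1 + e * d)) < X * (1 + e)^2 * (1 + d).
Proof. move=> HX; rewrite expnS expn1; nia. Qed.

Lemma main_sec : 0 < ell -> size_at r <= ell ->
  pi_l (G:=I) P ell (redirect psi r) < pi_l P ell rootL.
Proof.
move=> Hell Hsz.
have HGL : pi_l P ell rootL = (1 + ell) ^ (2 * R) * (1 + D) +
   \sum_(g | ((g \in SP rootL) && ~~ constr_tg g) && (g != rootL)) pj P ell g.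
  rewrite /pi_l (bigD1 rootL) /=; last by rewrite inE connect0 root_not_constr.
  by rewrite /pj /R /rk_at lab_root.
have Hinr : \sum_(g | (inr g \in SP (G:=I) (redirect psi r)) && ~~ constr_tg (G:=I) (inr g))
     pj P ell (inr g : node I) <=
   \sum_(g | ((g \in SP rootL) && ~~ constr_tg g) && (g != rootL)) pj P ell g.
  rewrite big_mkcond [X in _ <= X]big_mkcond; apply: leq_sum => g _.
  case Hc: (_ && _) => //; move/andP: Hc => [Hsp Hnc].
  have := inv_all Hsp; case => /= [Hcg|[Hsp' Hne]].
    by rewrite (constr_inr Hcg) in Hnc.
  have Hncg : ~~ constr_tg g by apply: contra Hnc; apply: constr_inr.
  by rewrite Hsp' Hncg Hne /= pj_inr.
have Hinl : \sum_(k | (inl k \in SP (G:=I) (redirect psi r)) && ~~ constr_tg (G:=I) (inl k))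
     pj P ell (inl k : node I) <=
   (if 0 < R then ell * ((1 + ell) ^ (2 * R.-1) * (1 + ell * D)) else 0).
  case: (posnP R) => [R0|Rp].
    rewrite /= leqn0; apply/eqP; apply: big1 => k /andP [Hsp _].
    by have [Hr _] := inv_all Hsp; move: (R_pos Hr); rewrite R0.
  apply: (@leq_trans (\sum_(k in [set k | reach r k]) ((1 + ell) ^ (2 * R.-1) * (1 + ell * D)))).
    rewrite big_mkcond [X in _ <= X]big_mkcond; apply: leq_sum => k _.
    case: ifP => // /andP [Hsp _]; have Hinv := inv_all Hsp.
    have [_ [Hrk _]] := Hinv; rewrite inE Hrk.
    apply: leq_trans (pj_inl_bound Hinv) _.
    by rewrite leq_mul2l leq_add2l leq_mul2r Hsz !orbT.
  by rewrite sum_nat_const leq_mul2r Hsz orbT.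
rewrite HGL /pi_l big_sumType /=.
apply: (@leq_ltn_trans ((if 0 < R then ell * ((1 + ell) ^ (2 * R.-1) * (1 + ell * D)) else 0) +
   \sum_(g | ((g \in SP rootL) && ~~ constr_tg g) && (g != rootL)) pj P ell g)).
  exact: leq_add Hinl Hinr.
rewrite ltn_add2r; case: (posnP R) => [->|Rp]; first by rewrite /= expn0 mul1n.
have -> : 2 * R = 2 * R.-1 + 2 by rewrite -{1}(prednK Rp) mulnS addnC.
by rewrite expnD; apply: arith; rewrite expn_gt0.
Qed.

End Main.

End Helpers.

Theorem mainTheorem3 (S : signature) (P : precedence S)
  (K : lgraph S) (l r : node K)
  (GL : lgraph S) (rootL : node GL) (psi : node K -> node GL) (ell : nat) :
  constructor_rule l r ->
  pt P r l ->
  term_graph rootL -> closed_at rootL -> tg_nrm rootL ->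
  hom l psi -> psi l = rootL ->
  @tg_nrm S (inst psi) (redirect psi r) ->
  0 < ell -> size_at r <= ell ->
  @pi_l S (inst psi) P ell (redirect psi r) < pi_l P ell rootL.
Proof.
move=> [HK [_ [_ Hbas]]] Hpt [HG _] _ Htg Hhom Hroot _ Hell Hsz.
exact: (Helpers.main_sec HK HG Hbas Hhom Hroot Htg Hpt Hell Hsz).
Qed.
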